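(* Let $X$ be a compact topological space, let $D\subseteq X$, let $\overline{D}$ be the closure of $D$ in $X$, and put $\partial D:=\overline{D}\setminus D$. Let $\overline{\mathbb{C}}=\mathbb{C}\cup\{\infty\}$ be the Riemann sphere and let $f\colon\overline{D}\to\overline{\mathbb{C}}$ be a continuous map such that $f(D)$ is open in $\overline{\mathbb{C}}$. Let $m:=\inf_{z\in\partial D}|f(z)|\in[0,\infty]$ (with $|\infty|=\infty$) and $B_m:=\{w\in\mathbb{C}\colon |w|<m\}$. Then either $f(D)\supseteq B_m$ (i.e. $f$ takes on $D$ all values of modulus $<m$), or $f(\overline{D})\subseteq\overline{\mathbb{C}}\setminus B_m$ (i.e. all values of $f$ on $\overline{D}$ have modulus $\ge m$).
   Context: Note that $\partial D$ is defined as $\overline{D}\setminus D$; the convention $|\infty|=\infty$ is used. *)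

(* Defs.v *)
From HB Require Import structures.
From mathcomp Require Import all_boot all_order all_algebra.
From mathcomp Require Import all_classical all_reals all_analysis.
From mathcomp Require Import complex.
Set Implicit Arguments. Unset Strict Implicit. Unset Printing Implicit Defensive.
Import Order.TTheory GRing.Theory Num.Theory.
Local Open Scope classical_set_scope.
Local Open Scope ring_scope.

(* The complex numbers are R[i] (real_closed's complex R), with modulus Normc.normc.
   The Riemann sphere is  option R[i]:  Some w = the finite point w,
   None = the point at infinity. *)
Definition riemann_sphere (R : realType) := option R[i].

Definition C_open (R : realType) (S : set R[i]) : Prop :=
  forall w, S w -> exists2 e : R, 0 < e &
    forall v, Normc.normc (v - w) < e -> S v.

Definition sphere_open (R : realType) (S : set (riemann_sphere R)) : Prop :=
  C_open (fun w => S (Some w)) /\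
  (S None -> exists r : R, forall w, r < Normc.normc w -> S (Some w)).

Definition sphere_abs (R : realType) (z : riemann_sphere R) : \bar R :=
  match z with Some w => (Normc.normc w)%:E | None => +oo%E end.

Definition sphere_continuous_on (X : topologicalType) (R : realType)
  (A : set X) (f : X -> riemann_sphere R) : Prop :=
  forall S, sphere_open S ->
    exists U : set X, open U /\ A `&` (f @^-1` S) = A `&` U.

(* Main.v *)
Require Import Defs.
From HB Require Import structures.
From mathcomp Require Import all_boot all_order all_algebra.
From mathcomp Require Import all_classical all_reals all_analysis.
From mathcomp Require Import complex.
From mathcomp Require Import ring lra.
Import Order.TTheory GRing.Theory Num.Theory.
Local Open Scope classical_set_scope.
Local Open Scope ring_scope.

Lemma nc_ge0 (R : realType) (x : R[i]) : 0 <= Normc.normc x.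
Proof. by case: x => a b /=; exact: sqrtr_ge0. Qed.

Lemma nc_real (R : realType) (t : R) : Normc.normc (t%:C)%C = `|t|.
Proof. by rewrite /= expr0n /= addr0 sqrtr_sqr. Qed.

Lemma nc_tri (R : realType) (x y z : R[i]) :
  Normc.normc (x - z) <= Normc.normc (x - y) + Normc.normc (y - z).
Proof. by have := @le_normcD R (x - y) (y - z); rewrite addrA subrK. Qed.

Lemma nc_sym (R : realType) (x y : R[i]) :
  Normc.normc (x - y) = Normc.normc (y - x).
Proof. by rewrite -(@normcN R) opprB. Qed.

Lemma nc_gd (R : realType) (w0 w1 : R[i]) (t s : R) :
  Normc.normc ((w0 + (t%:C)%C * (w1 - w0)) - (w0 + (s%:C)%C * (w1 - w0)))
  = `|t - s| * Normc.normc (w1 - w0).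
Proof.
rewrite -nc_real -Normc.normcM; congr Normc.normc.
rewrite (rmorphB (real_complex R)) /=; ring.
Qed.

Lemma seg (R : realType) (P B : set R[i]) (w0 w1 : R[i]) :
  (forall v, P v -> exists2 e : R, 0 < e &
     forall u, Normc.normc (u - v) < e -> P u) ->
  (forall w, B w -> (forall e : R, 0 < e ->
     exists2 v, P v & Normc.normc (v - w) < e) -> P w) ->
  (forall t : R, 0 <= t <= 1 -> B (w0 + (t%:C)%C * (w1 - w0))) ->
  P w0 -> P w1.
Proof.
move=> Po Pc Bseg P0; apply: contrapT => NP1.
pose g := fun t : R => w0 + (t%:C)%C * (w1 - w0).
have gd t s : Normc.normc (g t - g s) = `|t - s| * Normc.normc (w1 - w0).
  exact: nc_gd.
set n := Normc.normc (w1 - w0).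
have n0 : 0 <= n by apply: nc_ge0.
have g0 : g 0 = w0 by rewrite /g (rmorph0 (real_complex R)) mul0r addr0.
have g1 : g 1 = w1 by rewrite /g (rmorph1 (real_complex R)) mul1r addrC subrK.
pose A := [set t : R | (0 <= t <= 1) /\ ~ P (g t)].
have A1 : A 1 by split; [rewrite ler01 lexx | rewrite g1].
have Alb : has_lbound A by exists 0 => t [/andP[]].
have A0 : A !=set0 by exists 1.
set s := inf A.
have s0 : 0 <= s by apply: lb_le_inf => // t [/andP[]].
have s1 : s <= 1 by apply: ge_inf.
have below t : 0 <= t -> t < s -> P (g t).
  move=> t0 ts; apply: contrapT => Nt.
  have : s <= t.
    apply: ge_inf => //; split => //; apply/andP; split => //.
    exact: (ltW (lt_le_trans ts s1)).
  by rewrite leNgt ts.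
have n1 : 0 < n + 1 by lra.
have [Ps|NPs] := pselect (P (g s)).
- have [e e0 He] := Po _ Ps.
  pose d := e / (n + 1).
  have d0 : 0 < d by rewrite divr_gt0.
  have dn : d * n < e.
    have -> : e = d * (n + 1) by rewrite /d divfK // gt_eqF.
    rewrite ltr_pM2l //; lra.
  have : s + d <= s.
    apply: lb_le_inf => // t [/andP[t0 t1] Nt].
    have st : s <= t by apply: ge_inf => //; split => //; apply/andP; split.
    rewrite leNgt; apply/negP => tsd; apply: Nt.
    apply: He; rewrite gd ger0_norm ?subr_ge0 //.
    apply: le_lt_trans dn; apply: ler_wpM2r => //; lra.
  lra.
- have sp : 0 < s.
    rewrite lt_neqAle s0 andbT; apply/eqP => s_0; apply: NPs.
    by rewrite -s_0 g0.
  apply: NPs; apply: Pc; first by apply: Bseg; rewrite s0 s1.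
  move=> e e0.
  pose d := e / (n + 1).
  have d0 : 0 < d by rewrite divr_gt0.
  have dn : d * n < e.
    have -> : e = d * (n + 1) by rewrite /d divfK // gt_eqF.
    rewrite ltr_pM2l //; lra.
  pose mu := Num.min s d.
  have mus : mu <= s by rewrite ge_min lexx.
  have mud : mu <= d by rewrite ge_min lexx orbT.
  have mu0 : 0 < mu by rewrite lt_min sp d0.
  pose t := s - mu / 2.
  exists (g t); first by apply: below; rewrite /t; lra.
  rewrite gd ler0_norm; last by rewrite /t; lra.
  apply: le_lt_trans dn; apply: ler_wpM2r => //; rewrite /t; lra.
Qed.

Lemma convex_ball (R : realType) (m : \bar R) (w0 w1 : R[i]) (t : R) :
  ((Normc.normc w0)%:E < m)%E -> ((Normc.normc w1)%:E < m)%E ->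
  0 <= t <= 1 -> ((Normc.normc (w0 + (t%:C)%C * (w1 - w0)))%:E < m)%E.
Proof.
move=> h0 h1 /andP[t0 t1].
have -> : w0 + (t%:C)%C * (w1 - w0) = ((1 - t)%:C)%C * w0 + (t%:C)%C * w1.
  by rewrite (rmorphB (real_complex R)) (rmorph1 (real_complex R)); ring.
have := @le_normcD R (((1 - t)%:C)%C * w0) ((t%:C)%C * w1).
rewrite !Normc.normcM !nc_real ger0_norm ?subr_ge0 // ger0_norm // => hle.
have a0 := nc_ge0 _ w0; have b0 := nc_ge0 _ w1.
set a := Normc.normc w0 in h0 hle a0 *; set b := Normc.normc w1 in h1 hle b0 *.
have [ab|ba] := leP a b.
- apply: le_lt_trans h1; rewrite lee_fin; apply: (le_trans hle).
  have : (1 - t) * a <= (1 - t) * b by apply: ler_wpM2l; lra.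
  lra.
- apply: le_lt_trans h0; rewrite lee_fin; apply: (le_trans hle).
  have : t * b <= t * a by apply: ler_wpM2l => //; lra.
  lra.
Qed.

Theorem mainTheorem8 (R : realType) (X : topologicalType) (D : set X)
  (f : X -> riemann_sphere R) :
  compact [set: X] ->
  sphere_continuous_on (closure D) f ->
  sphere_open (f @` D) ->
  let m := ereal_inf (@sphere_abs R @` (f @` (closure D `\` D))) in
  (forall w : R[i], ((Normc.normc w)%:E < m)%E -> exists2 x, D x & f x = Some w)
  \/
  (forall x, closure D x -> (m <= sphere_abs (f x))%E).
Proof.
move=> cX fc fo m.
pose W := fun v : R[i] => exists2 x, D x & f x = Some v.
have Wopen : forall v, W v -> exists2 e : R, 0 < e &
     forall u, Normc.normc (u - v) < e -> W u.
  by move=> v Wv; exact: fo.1 v Wv.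
have mle : forall x, closure D x -> ~ D x -> (m <= sphere_abs (f x))%E.
  move=> x cx Dx; apply: ereal_inf_lbound; exists (f x) => //.
  by exists x.
have Wclosed : forall w, ((Normc.normc w)%:E < m)%E ->
    (forall e : R, 0 < e -> exists2 v, W v & Normc.normc (v - w) < e) -> W w.
  move=> w wm Hcl.
  pose Bs := fun e : R => [set x | D x /\
     exists2 v, f x = Some v & Normc.normc (v - w) < e].
  pose F := filter_from [set e : R | 0 < e] Bs.
  have FF : Filter F.
    apply: filter_from_filter; first by exists 1; exact: ltr01.
    move=> i j i0 j0; exists (Num.min i j); first by rewrite /= lt_min i0 j0.
    move=> x [Dx [v fv vl]]; split; split => //; exists v => //;
      move: vl; rewrite lt_min => /andP[].
      by [].
    by [].
  have PF : ProperFilter F.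
    apply: filter_from_proper => e e0.
    have [v [x Dx fx] ve] := Hcl e e0.
    by exists x; split => //; exists v.
  have [x [_ clx]] := cX F PF filterT.
  have FB : forall e : R, 0 < e -> F (Bs e) by move=> e e0; exists e.
  have cDx : closure D x.
    move=> B nB; have [y [[Dy _] By]] := clx (Bs 1) B (FB 1 ltr01) nB.
    by exists y.
  have key : forall (S : set (riemann_sphere R)) (e : R), sphere_open S ->
      S (f x) -> 0 < e ->
      (forall v, Normc.normc (v - w) < e -> ~ S (Some v)) -> False.
    move=> S e So Sfx e0 sep.
    have [U [Uo EU]] := fc S So.
    have : (closure D `&` f @^-1` S) x by split.
    rewrite EU => -[_ Ux].
    have nU : nbhs x U by apply: open_nbhs_nbhs; split.
    have [y [[Dy [v fyv vw]] Uy]] := clx (Bs e) U (FB e e0) nU.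
    have : (closure D `&` U) y by split => //; apply: subset_closure.
    rewrite -EU => -[_]; rewrite /preimage /= fyv.
    exact: sep.
  have fxw : f x = Some w.
    apply: contrapT => neq.
    case fx: (f x) => [u|].
    - have uw : u != w by apply/eqP => uw; apply: neq; rewrite fx uw.
      set d := Normc.normc (u - w).
      have d0 : 0 < d.
        rewrite lt_neqAle nc_ge0 andbT eq_sym; apply/eqP => /Normc.eq0_normc.
        by move/eqP; rewrite subr_eq0 (negbTE uw).
      pose S := fun z : riemann_sphere R => match z with
        Some u' => Normc.normc (u' - u) < d / 2 | None => false end.
      apply: (key S (d / 2)); last first.
      + move=> v vw; rewrite /S => vu.
        have := nc_tri _ u v w; rewrite (nc_sym _ u v) -/d; lra.
      + by rewrite divr_gt0.
      + by rewrite fx /S subrr Normc.normc0 divr_gt0.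
      + split => //= w' Sw'; exists (d / 2 - Normc.normc (w' - u)).
          by rewrite subr_gt0.
        move=> v vw'; have := nc_tri _ v w' u; lra.
    - pose S := fun z : riemann_sphere R => match z with
        Some u' => Normc.normc w + 1 < Normc.normc u' | None => true end.
      apply: (key S 1); last first.
      + move=> v vw; rewrite /S => wv.
        have := nc_tri _ v w 0; rewrite !subr0; lra.
      + exact: ltr01.
      + by rewrite fx.
      + split => [w' Sw'|_].
          exists (Normc.normc w' - Normc.normc w - 1); first by rewrite /S in Sw'; lra.
          move=> v vw'; rewrite /S.
          have := nc_tri _ w' v 0; rewrite !subr0 (nc_sym _ w' v); lra.
        by exists (Normc.normc w + 1).
  have [Dx|NDx] := pselect (D x); first by exists x.
  have := mle x cDx NDx; rewrite fxw /= => h.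
  by move: wm; rewrite ltNge h.
have [[w0 Hw0 W0]|NW] := pselect (exists2 w, ((Normc.normc w)%:E < m)%E & W w).
- left => w1 Hw1.
  apply: (@seg R W (fun w => ((Normc.normc w)%:E < m)%E) w0 w1 Wopen Wclosed) => //.
  by move=> t; apply: convex_ball.
- right => x cx.
  have [Dx|NDx] := pselect (D x); last exact: mle.
  case E: (f x) => [v|]; last by rewrite /= leey.
  rewrite /= leNgt; apply/negP => vm; apply: NW; exists v => //; by exists x.
Qed.
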